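(* Let $p\in(0,1)$ and let $\mathcal{F},\mathcal{G}\subseteq 2^{[n]}$ be cross-Sperner families. Then $\mu_p(\mathcal{F})^{1/2}+\mu_p(\mathcal{G})^{1/2}\le 1$.
   Context: Families $\mathcal{F},\mathcal{G}\subseteq 2^{[n]}$ are cross-Sperner if for all $F\in\mathcal{F}$ and $G\in\mathcal{G}$ neither $F\subseteq G$ nor $G\subseteq F$. For $p\in(0,1)$ and $F\subseteq[n]$, $\mu_p(F)=p^{|F|}(1-p)^{n-|F|}$, and $\mu_p(\mathcal{F})=\sum_{F\in\mathcal{F}}\mu_p(F)$. *)

(* Defs.v *)
From HB Require Import structures.
From mathcomp Require Import all_boot all_order all_algebra.
Set Implicit Arguments. Unset Strict Implicit. Unset Printing Implicit Defensive.
Import Order.TTheory GRing.Theory Num.Theory.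
Local Open Scope ring_scope.

Definition cross_sperner (n : nat) (F G : {set {set 'I_n}}) : Prop :=
  forall A B, A \in F -> B \in G -> ~~ (A \subset B) /\ ~~ (B \subset A).

Definition mu_p (R : numDomainType) (n : nat) (p : R) (A : {set 'I_n}) : R :=
  p ^+ #|A| * (1 - p) ^+ (n - #|A|).

Definition mu_p_fam (R : numDomainType) (n : nat) (p : R) (F : {set {set 'I_n}}) : R :=
  \sum_(A in F) mu_p p A.

(* Main.v *)
Require Import Defs.
From HB Require Import structures.
From mathcomp Require Import all_boot all_order all_algebra.
From mathcomp Require Import ring lra zify.
Import Order.TTheory GRing.Theory Num.Theory.
Local Open Scope ring_scope.

Set Implicit Arguments. Unset Strict Implicit.
Section Harris.
Variables (R : rcfType) (T : finType) (p : R).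
Hypotheses (hp0 : 0 < p) (hp1 : p < 1).
Ltac plra := have := hp0; have := hp1; move=> ? ?; lra.
Ltac pnra := have := hp0; have := hp1; move=> ? ?; nra.

Definition wt (S A : {set T}) : R := \prod_(i in S) (if i \in A then p else 1 - p).
Definition ES (S : {set T}) (h : {set T} -> R) : R :=
  \sum_(A in powerset S) wt S A * h A.

Lemma wt_ge0 S A : 0 <= wt S A.
Proof. apply: prodr_ge0 => i _; case: ifP => _; plra. Qed.

Lemma ES_ext S h1 h2 : (forall A, h1 A = h2 A) -> ES S h1 = ES S h2.
Proof. by move=> H; apply: eq_bigr => A _; rewrite H. Qed.

Lemma ES_mono S h1 h2 : (forall A, h1 A <= h2 A) -> ES S h1 <= ES S h2.
Proof. by move=> H; apply: ler_sum => A _; apply: ler_wpM2l; [exact: wt_ge0|]. Qed.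

Lemma ES_ge0 S h : (forall A, 0 <= h A) -> 0 <= ES S h.
Proof. by move=> H; apply: sumr_ge0 => A _; apply: mulr_ge0; [exact: wt_ge0|]. Qed.

Lemma ES_add S h1 h2 : ES S (fun A => h1 A + h2 A) = ES S h1 + ES S h2.
Proof. by rewrite /ES -big_split; apply: eq_bigr => A _; rewrite mulrDr. Qed.

Lemma ES0 h : ES set0 h = h set0.
Proof. by rewrite /ES powerset0 big_set1 /wt big_set0 mul1r. Qed.

Lemma wt_U1 (x : T) (S A : {set T}) : x \notin S -> wt (x |: S) A = (if x \in A then p else 1 - p) * wt S A.
Proof. by move=> xS; rewrite /wt big_setU1. Qed.

Lemma wt_addx (x : T) (S B : {set T}) : x \notin S -> wt S (x |: B) = wt S B.
Proof.
move=> xS; apply: eq_bigr => i iS; rewrite in_setU1.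
have -> : (i == x) = false by apply/eqP => ix; rewrite -ix iS in xS.
by [].
Qed.

Lemma ES_step (x : T) (S : {set T}) h : x \notin S ->
  ES (x |: S) h = ES S (fun A => (1 - p) * h A + p * h (x |: A)).
Proof.
move=> xS; rewrite /ES (bigID (fun A : {set T} => x \in A)) /= addrC.
have -> : \sum_(A in powerset S) wt S A * ((1 - p) * h A + p * h (x |: A)) =
   \sum_(A in powerset S) (1 - p) * wt S A * h A +
   \sum_(A in powerset S) p * wt S (x |: A) * h (x |: A).
  rewrite -big_split; apply: eq_bigr => A _; rewrite wt_addx // /=; ring.
congr (_ + _).
  rewrite [in RHS]big_mkcond [in LHS]big_mkcond; apply: eq_bigr => A _.
  rewrite !inE.
  case xA: (x \in A) => /=.
    rewrite andbF; case: ifP => // AS; have := subsetP AS x xA; by rewrite (negbTE xS).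
  rewrite andbT -subDset.
  have -> : A :\: [set x] = A.
    apply/setP => y; rewrite !inE; case: eqP => // ->; by rewrite xA.
  case: ifP => // _; rewrite wt_U1 // xA; ring.
have Hs : [set x |: B | B in powerset S] = [set A in powerset (x |: S) | x \in A].
  apply/setP => A; rewrite !inE; apply/imsetP/andP.
    case=> B; rewrite inE => BS ->; split; last by rewrite setU11.
    by rewrite setUS.
  case=> AS xA; exists (A :\ x); last by rewrite setD1K.
  by rewrite inE subDset.
have inj : {in powerset S &, injective (fun B => x |: B)}.
  move=> B1 B2; rewrite !inE => B1S B2S E.
  have xB1 : x \notin B1 by apply: contra xS; apply: (subsetP B1S).
  have xB2 : x \notin B2 by apply: contra xS; apply: (subsetP B2S).
  by rewrite -(setU1K xB1) -(setU1K xB2) E.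
rewrite -(big_imset (fun A => p * wt S A * h A) inj) Hs.
rewrite big_set /=; apply: eq_bigr => A /andP [_ xA].
by rewrite wt_U1 // xA.
Qed.

Lemma ES_one S : ES S (fun _ => 1) = 1.
Proof.
move: {2}#|S| (erefl #|S|) => k; elim: k S => [|k IH] S HS.
  move/eqP: HS; rewrite cards_eq0 => /eqP ->; by rewrite ES0.
have [x xS] : exists x, x \in S.
  apply/set0Pn; apply/negP => /eqP S0; by rewrite S0 cards0 in HS.
rewrite -(setD1K xS) ES_step ?setD11 //.
rewrite (@ES_ext _ _ (fun _ => 1)); last by move=> A /=; ring.
apply: IH; by rewrite (cardsD1 x S) xS in HS; case: HS.
Qed.

Definition incr (f : {set T} -> R) := forall A B : {set T}, A \subset B -> f A <= f B.
Definition decr (f : {set T} -> R) := forall A B : {set T}, A \subset B -> f B <= f A.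

Lemma harris S f g : incr f -> decr g ->
  ES S (fun A => f A * g A) <= ES S f * ES S g.
Proof.
move: {2}#|S| (erefl #|S|) => k; elim: k S f g => [|k IH] S f g HS fi gd.
  move/eqP: HS; rewrite cards_eq0 => /eqP ->; by rewrite !ES0.
have [x xS] : exists x, x \in S.
  apply/set0Pn; apply/negP => /eqP S0; by rewrite S0 cards0 in HS.
have HS' : #|S :\ x| = k by rewrite (cardsD1 x S) xS in HS; case: HS.
have xS' : x \notin S :\ x by rewrite setD11.
rewrite -(setD1K xS) !ES_step //.
set f' := fun A => (1 - p) * f A + p * f (x |: A).
set g' := fun A => (1 - p) * g A + p * g (x |: A).
apply: le_trans (IH _ f' g' HS' _ _); last first.
- move=> A B AB; rewrite /g'.
  have h1 := gd _ _ AB; have h2 := gd _ _ (setUS [set x] AB); pnra.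
- move=> A B AB; rewrite /f'.
  have h1 := fi _ _ AB; have h2 := fi _ _ (setUS [set x] AB); pnra.
apply: ES_mono => A; rewrite /f' /g'.
have h1 := fi _ _ (subsetUr [set x] A); have h2 := gd _ _ (subsetUr [set x] A).
rewrite -subr_ge0.
set f0 := f A; set f1 := f (x |: A); set g0 := g A; set g1 := g (x |: A).
have -> : ((1 - p) * f0 + p * f1) * ((1 - p) * g0 + p * g1) -
    ((1 - p) * (f0 * g0) + p * (f1 * g1)) = (p * (1 - p)) * ((f1 - f0) * (g0 - g1)).
  ring.
apply: mulr_ge0; first by apply: mulr_ge0; plra.
apply: mulr_ge0; rewrite subr_ge0 //.
Qed.

End Harris.
Unset Implicit Arguments.

Lemma wt_setT (R : rcfType) (n : nat) (p : R) (A : {set 'I_n}) :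
  wt p [set: 'I_n] A = mu_p p A.
Proof.
rewrite /wt /mu_p (eq_bigl (fun i => true)); last by move=> i; rewrite in_setT.
rewrite (bigID (fun i => i \in A)) /=.
rewrite (eq_bigr (fun _ => p)); last by move=> i ->.
rewrite [X in _ * X](eq_bigr (fun _ => 1 - p)); last by move=> i /negbTE ->.
rewrite !prodr_const; congr (_ * _ ^+ _).
have h : (#|A| + #|[predC A]|)%N = n by rewrite cardC card_ord.
have -> : #|(fun i : 'I_n => i \notin A)| = #|[predC A]| by apply: eq_card.
by rewrite -[X in (X - _)%N]h addKn.
Qed.


Lemma ES_setT (R : rcfType) (n : nat) (p : R) h :
  ES p [set: 'I_n] h = \sum_A mu_p p A * h A.
Proof.
rewrite /ES powersetT; apply: eq_big => [A|A _]; first by rewrite ?inE.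
by rewrite wt_setT.
Qed.

Theorem theorem2p2 (R : rcfType) (n : nat) (p : R) (hp0 : 0 < p) (hp1 : p < 1)
  (F G : {set {set 'I_n}}) (hFG : cross_sperner F G) :
  Num.sqrt (mu_p_fam p F) + Num.sqrt (mu_p_fam p G) <= 1.
Proof.
pose up (H : {set {set 'I_n}}) (X : {set 'I_n}) : R := ([exists A in H, A \subset X])%:R.
pose dn (H : {set {set 'I_n}}) (X : {set 'I_n}) : R := ([exists A in H, X \subset A])%:R.
pose E := ES p [set: 'I_n].
have upi H : incr (up H).
  move=> A B AB; rewrite /up ler_nat.
  case: existsP => //= [[C /andP [CH CA]]].
  suff -> : [exists A0 in H, A0 \subset B] by [].
  by apply/existsP; exists C; rewrite CH (subset_trans CA AB).
have dnd H : decr (dn H).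
  move=> A B AB; rewrite /dn ler_nat.
  case: existsP => //= [[C /andP [CH CA]]].
  suff -> : [exists A0 in H, A \subset A0] by [].
  by apply/existsP; exists C; rewrite CH (subset_trans AB CA).
have ind_ge0 (b : bool) : 0 <= (b%:R : R) by rewrite ler0n.
have mufam H : mu_p_fam p H <= E (up H) * E (dn H).
  apply: le_trans (harris hp0 hp1 _ (upi H) (dnd H)).
  rewrite /E ES_setT /mu_p_fam big_mkcond /=; apply: ler_sum => A _.
  case: ifP => AH.
    rewrite /up /dn.
    have -> : [exists A0 in H, A0 \subset A] by apply/existsP; exists A; rewrite AH subxx.
    have -> : [exists A0 in H, A \subset A0] by apply/existsP; exists A; rewrite AH subxx.
    by rewrite !mulr1.
  apply: mulr_ge0; first by rewrite -wt_setT; exact: wt_ge0.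
  by apply: mulr_ge0.
have disj H1 H2 : cross_sperner H1 H2 -> E (up H1) + E (dn H2) <= 1.
  move=> hc; rewrite /E -ES_add -(ES_one p [set: 'I_n]).
  apply: ES_mono => // X; rewrite /up /dn.
  case: existsP => [[A /andP [AH AX]]|_]; case: existsP => [[B /andP [BH XB]]|_] //=.
  - by case: (hc _ _ AH BH); rewrite (subset_trans AX XB).
  all: rewrite ?addr0 ?add0r ?lexx ?ler0n ?ler01 //.

have hGF : cross_sperner G F by move=> A B AG BF; have [h1 h2] := hFG B A BF AG; by split.
have d1 := disj _ _ hFG; have d2 := disj _ _ hGF.
have E0 H : 0 <= E (up H) /\ 0 <= E (dn H).
  by split; apply: (ES_ge0 hp0 hp1) => A; apply: ind_ge0.
have [a0 b0] := E0 F; have [c0 d0] := E0 G.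
have mF := mufam F; have mG := mufam G.
set a := E (up F) in a0 d1 mF; set b := E (dn F) in b0 d2 mF.
set c := E (up G) in c0 d2 mG; set d := E (dn G) in d0 d1 mG.
have sF : Num.sqrt (mu_p_fam p F) <= Num.sqrt a * Num.sqrt b.
  by rewrite -sqrtrM // ler_sqrt //; apply: mulr_ge0.
have sG : Num.sqrt (mu_p_fam p G) <= Num.sqrt c * Num.sqrt d.
  by rewrite -sqrtrM // ler_sqrt //; apply: mulr_ge0.
have qa := sqr_sqrtr a0; have qb := sqr_sqrtr b0.
have qc := sqr_sqrtr c0; have qd := sqr_sqrtr d0.
set sa := Num.sqrt a in sF qa; set sb := Num.sqrt b in sF qb.
set sc := Num.sqrt c in sG qc; set sd := Num.sqrt d in sG qd.
have h1 : 0 <= (sa - sb) ^+ 2 by apply: sqr_ge0.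
have h2 : 0 <= (sc - sd) ^+ 2 by apply: sqr_ge0.
nra.
Qed.
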